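(* In the setting described in the context, assume that $D^pf(x)=\mathcal{C}_*$ for all $x\in\mathbb{R}^n$ (for a fixed $\mathcal{C}_*\in\mathbb{R}^{\otimes^p n}_{\mathrm{sym}}$) and that $W_k=W_*$ for all $k$, for a fixed nonsingular $W_*\in\mathbb{R}^{n\times n}$. If the vectors $W_*^{-1}s_0,\dots,W_*^{-1}s_{n-1}$ are pairwise orthogonal, then $\mathcal{C}_n=\mathcal{C}_*$.
   Context: Setting (higher-order secant update): $p\ge 2$; $f:\mathbb{R}^n\to\mathbb{R}$ is $p$ times continuously differentiable, $D^pf(x)\in\mathbb{R}^{\otimes^p n}_{\mathrm{sym}}$ denoting its $p$th derivative viewed as a symmetric multilinear map; $(x_k)_{k\ge0}$ is a sequence in $\mathbb{R}^n$ with steps $s_k = x_{k+1}-x_k \ne 0$; $(W_k)_{k\ge0}$ are nonsingular $n\times n$ matrices; $\widetilde{\mathcal{C}}_k = \int_0^1 D^pf(x_k+ts_k)\,dt$; $\mathcal{C}_0\in\mathbb{R}^{\otimes^p n}_{\mathrm{sym}}$ is arbitrary and $\mathcal{C}_{k+1}$ is the unique minimizer of $\|(\mathcal{C}-\mathcal{C}_k)[W_k]^p\|_F$ over $\mathcal{C}\in\mathbb{R}^{\otimes^p n}_{\mathrm{sym}}$ subject to $\mathcal{C}[s_k]=\widetilde{\mathcal{C}}_k[s_k]$. Notation: a $p$-tensor is a multilinear map $(\mathbb{R}^n)^p\to\mathbb{R}$; $\mathcal{T}[s]$ fixes the first argument to $s$; $(\mathcal{T}[M]^p)[s_1,\dots,s_p]=\mathcal{T}[Ms_1,\dots,Ms_p]$;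 symmetric means invariant under permutation of arguments; $\|\cdot\|_F$ is the Frobenius norm of the array of entries $\mathcal{T}[e_{i_1},\dots,e_{i_p}]$. *)

(* Defs.v *)
From HB Require Import structures.
From mathcomp Require Import all_boot all_order all_algebra all_fingroup.
From mathcomp Require Import all_classical all_reals all_analysis.
Set Implicit Arguments. Unset Strict Implicit. Unset Printing Implicit Defensive.
Import Order.TTheory GRing.Theory Num.Theory.
Import numFieldNormedType.Exports.
Local Open Scope classical_set_scope.
Local Open Scope ring_scope.

(* Vectors of R^n are row vectors 'rV[R]_n ; a matrix M acts as v |-> M v,
   i.e. (mapply M v) 0 i = \sum_j M i j * v 0 j. *)
Definition mapply {R : realType} {n : nat} (M : 'M[R]_n) (v : 'rV[R]_n) : 'rV[R]_n :=
  v *m M^T.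

Definition evec {R : realType} {n : nat} (i : 'I_n) : 'rV[R]_n :=
  \row_l (l == i)%:R.

Definition dotv {R : realType} {n : nat} (u v : 'rV[R]_n) : R :=
  \sum_(i < n) u 0 i * v 0 i.

(* A p-tensor on R^n, given by its array of entries T[e_{i_1},...,e_{i_p}],
   indexed by the multi-index idx : 'I_p -> 'I_n. *)
Definition tensor (R : realType) (n p : nat) :=
  {ffun {ffun 'I_p -> 'I_n} -> R}.

Definition teval {R : realType} {n p : nat} (T : tensor R n p)
  (v : 'I_p -> 'rV[R]_n) : R :=
  \sum_(idx : {ffun 'I_p -> 'I_n}) T idx * \prod_(k < p) v k 0 (idx k).

(* T[s] : the multilinear map obtained by fixing the first argument to s;
   it is represented as a function of the remaining arguments v_2,...,v_p
   (the value given to the first slot of v is ignored). *)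
Definition tfix1 {R : realType} {n p : nat} (T : tensor R n p) (s : 'rV[R]_n) :
  ('I_p -> 'rV[R]_n) -> R :=
  fun v => teval T (fun k => if val k == 0%N then s else v k).

(* T[M]^p : (T[M]^p)[s_1,...,s_p] = T[M s_1, ..., M s_p] *)
Definition ttrans {R : realType} {n p : nat} (T : tensor R n p) (M : 'M[R]_n) :
  tensor R n p :=
  [ffun idx : {ffun 'I_p -> 'I_n} =>
     teval T (fun k => mapply M (evec (idx k)))].

Definition tsym {R : realType} {n p : nat} (T : tensor R n p) : Prop :=
  forall (sigma : 'S_p) (idx : {ffun 'I_p -> 'I_n}),
    T [ffun k => idx (sigma k)] = T idx.

Definition frob {R : realType} {n p : nat} (T : tensor R n p) : R :=
  Num.sqrt (\sum_(idx : {ffun 'I_p -> 'I_n}) T idx ^+ 2).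

Definition tsub {R : realType} {n p : nat} (A B : tensor R n p) : tensor R n p :=
  [ffun idx => A idx - B idx].

Fixpoint iterp {R : realType} {n : nat} (f : 'rV[R]_n -> R) (js : seq 'I_n)
  : 'rV[R]_n -> R :=
  match js with
  | [::] => f
  | i :: js' => fun x => derive (iterp f js') x (evec i)
  end.

Definition Cp {R : realType} {n : nat} (p : nat) (f : 'rV[R]_n -> R) : Prop :=
  forall js : seq 'I_n, (size js <= p)%N ->
    continuous (iterp f js) /\
    ((size js < p)%N -> forall (i : 'I_n) (x : 'rV[R]_n),
        derivable (iterp f js) x (evec i)).

Definition Dp {R : realType} {n : nat} (p : nat) (f : 'rV[R]_n -> R)
  (x : 'rV[R]_n) : tensor R n p :=
  [ffun idx : {ffun 'I_p -> 'I_n} => iterp f [seq idx k | k <- enum 'I_p] x].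

Definition Ctilde {R : realType} {n : nat} (p : nat) (f : 'rV[R]_n -> R)
  (xk sk : 'rV[R]_n) : tensor R n p :=
  [ffun idx : {ffun 'I_p -> 'I_n} =>
     Rintegral (@lebesgue_measure R) `[0, 1]%classic
       (fun t : R => Dp p f (xk + t *: sk) idx)].

Definition is_secant_update {R : realType} {n p : nat}
  (Ck Ct : tensor R n p) (W : 'M[R]_n) (s : 'rV[R]_n) (C' : tensor R n p) : Prop :=
  [/\ tsym C', tfix1 C' s = tfix1 Ct s &
      forall C : tensor R n p, tsym C -> tfix1 C s = tfix1 Ct s ->
        frob (ttrans (tsub C' Ck) W) <= frob (ttrans (tsub C Ck) W)].

(* Main.v *)
Require Import Defs.
From HB Require Import structures.
From mathcomp Require Import all_boot all_order all_algebra all_fingroup.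
From mathcomp Require Import all_classical all_reals all_analysis.
From mathcomp Require Import ring lra.
Import Order.TTheory GRing.Theory Num.Theory.
Import numFieldNormedType.Exports.
Local Open Scope ring_scope.

Local Open Scope classical_set_scope.
Lemma Ctilde_cst (R : realType) (n p : nat) (f : 'rV[R]_n -> R) (Cs : tensor R n p) xk sk :
  (forall y, Dp p f y = Cs) -> Ctilde p f xk sk = Cs.
Proof.
move=> hD; apply/ffunP => idx; rewrite ffunE.
have -> : (fun t : R => Dp p f (xk + t *: sk) idx) = fun _ => Cs idx by apply/funext => t; rewrite hD.
rewrite Rintegral_cst; last exact: measurable_itv.
Local Open Scope classical_set_scope.
by rewrite [X in fine X]lebesgue_measure_itv /= lte_fin ltr01 /= subr0 mulr1.
Qed.

Lemma teval_ext {R : realType} {n p : nat} (T : tensor R n p) (v w : 'I_p -> 'rV[R]_n) :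
  (forall k, v k = w k) -> teval T v = teval T w.
Proof. by move=> h; apply: eq_bigr => idx _; congr (_ * _); apply: eq_bigr => k _; rewrite h. Qed.

Definition tadd {R : realType} {n p : nat} (A B : tensor R n p) : tensor R n p :=
  [ffun idx => A idx + B idx].

Lemma teval_tsub {R : realType} {n p : nat} (A B : tensor R n p) v :
  teval (tsub A B) v = teval A v - teval B v.
Proof.
rewrite /teval -sumrB; apply: eq_bigr => idx _; by rewrite ffunE mulrBl.
Qed.

Lemma teval_tadd {R : realType} {n p : nat} (A B : tensor R n p) v :
  teval (tadd A B) v = teval A v + teval B v.
Proof.
rewrite /teval -big_split; apply: eq_bigr => idx _; by rewrite ffunE mulrDl.
Qed.

Lemma teval0v {R : realType} {n p : nat} (T : tensor R n p) v (k0 : 'I_p) :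
  v k0 = 0 -> teval T v = 0.
Proof.
move=> h; rewrite /teval big1 // => idx _.
by rewrite (bigD1 k0) //= h mxE mul0r mulr0.
Qed.

Lemma evecE {R : realType} {n : nat} (i j : 'I_n) : (evec i : 'rV[R]_n) 0 j = (j == i)%:R.
Proof. by rewrite mxE. Qed.

Lemma mapplyE {R : realType} {n : nat} (M : 'M[R]_n) v j :
  mapply M v 0 j = \sum_i M j i * v 0 i.
Proof. rewrite /mapply mxE; apply: eq_bigr => i _; by rewrite mxE mulrC. Qed.

Lemma mapply_evec {R : realType} {n : nat} (M : 'M[R]_n) i j :
  mapply M (evec i) 0 j = M j i.
Proof.
rewrite mapplyE (bigD1 i) //= evecE eqxx mulr1 big1 ?addr0 // => l hl.
by rewrite evecE (negbTE hl) mulr0.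
Qed.

Lemma mapply_comp {R : realType} {n : nat} (A B : 'M[R]_n) v :
  mapply (A *m B) v = mapply A (mapply B v).
Proof. by rewrite /mapply trmx_mul mulmxA. Qed.

Lemma mapply1 {R : realType} {n : nat} (v : 'rV[R]_n) : mapply 1%:M v = v.
Proof. by rewrite /mapply trmx1 mulmx1. Qed.

Lemma teval_ttrans {R : realType} {n p : nat} (T : tensor R n p) M v :
  teval (ttrans T M) v = teval T (fun k => mapply M (v k)).
Proof.
rewrite /teval.
under eq_bigr do rewrite ffunE /teval mulr_suml.
rewrite exchange_big /=; apply: eq_bigr => jdx _.
under eq_bigr do rewrite -mulrA.
rewrite -mulr_sumr; congr (_ * _).
transitivity (\prod_(k < p) \sum_(i < n) M (jdx k) i * v k 0 i); last first.
  by apply: eq_bigr => k _; rewrite mapplyE.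
rewrite bigA_distr_bigA /=; apply: eq_bigr => idx _.
rewrite -big_split /=; apply: eq_bigr => k _.
by rewrite mapply_evec.
Qed.

Lemma teval_evec {R : realType} {n p : nat} (T : tensor R n p) (idx : {ffun 'I_p -> 'I_n}) :
  teval T (fun k => evec (idx k)) = T idx.
Proof.
rewrite /teval (bigD1 idx) //=.
rewrite big1 ?mulr1; last by move=> k _; rewrite evecE eqxx.
rewrite big1 ?addr0 // => jdx hj.
have [k hk] : exists k, jdx k != idx k.
  apply/existsP; apply: contraNT hj => /existsPn h.
  by apply/eqP/ffunP => k; apply/eqP; have := h k; rewrite negbK.
by rewrite (bigD1 k) //= evecE (negbTE hk) mul0r mulr0.
Qed.

Lemma ttrans1 {R : realType} {n p : nat} (T : tensor R n p) : ttrans T 1%:M = T.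
Proof.
apply/ffunP => idx; rewrite ffunE -teval_evec; apply: teval_ext => k.
by rewrite mapply1.
Qed.

Lemma ttrans_comp {R : realType} {n p : nat} (T : tensor R n p) A B :
  ttrans (ttrans T A) B = ttrans T (A *m B).
Proof.
apply/ffunP => idx; rewrite !ffunE teval_ttrans; apply: teval_ext => k.
by rewrite mapply_comp.
Qed.

Lemma ttrans_tsub {R : realType} {n p : nat} (A B : tensor R n p) M :
  ttrans (tsub A B) M = tsub (ttrans A M) (ttrans B M).
Proof. by apply/ffunP => idx; rewrite !ffunE teval_tsub. Qed.

Lemma teval_perm {R : realType} {n p : nat} (T : tensor R n p) (s : 'S_p) v :
  tsym T -> teval T (fun k => v (s k)) = teval T v.
Proof.
move=> hT; rewrite /teval.
have hinj : injective (fun jdx : {ffun 'I_p -> 'I_n} => [ffun k => jdx (s k)]).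
  move=> a b /ffunP h; apply/ffunP => k.
  by have := h (s^-1 k)%g; rewrite !ffunE permKV.
rewrite (reindex_inj hinj) /=; apply: eq_bigr => jdx _.
rewrite hT; congr (_ * _).
rewrite (reindex_inj (@perm_inj _ s^-1)) /=; apply: eq_bigr => k _.
by rewrite ffunE !permKV.
Qed.

Lemma tsym_ttrans {R : realType} {n p : nat} (T : tensor R n p) M :
  tsym T -> tsym (ttrans T M).
Proof.
move=> hT s idx; rewrite !ffunE.
rewrite -(teval_perm T s (fun k => mapply M (evec (idx k)))) //.
by apply: teval_ext => k; rewrite ffunE.
Qed.

Lemma tsym_tsub {R : realType} {n p : nat} (A B : tensor R n p) :
  tsym A -> tsym B -> tsym (tsub A B).
Proof. by move=> hA hB s idx; rewrite !ffunE hA hB. Qed.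

Lemma tsym_tadd {R : realType} {n p : nat} (A B : tensor R n p) :
  tsym A -> tsym B -> tsym (tadd A B).
Proof. by move=> hA hB s idx; rewrite !ffunE hA hB. Qed.

Definition tdot {R : realType} {n p : nat} (A B : tensor R n p) : R :=
  \sum_idx A idx * B idx.

Lemma tdotC {R : realType} {n p : nat} (A B : tensor R n p) : tdot A B = tdot B A.
Proof. by apply: eq_bigr => idx _; rewrite mulrC. Qed.

Lemma tdot_ttrans {R : realType} {n p : nat} (T G : tensor R n p) M :
  tdot (ttrans T M) G = tdot T (ttrans G M^T).
Proof.
rewrite /tdot.
under eq_bigr do rewrite ffunE /teval mulr_suml.
rewrite exchange_big /=.
under [RHS]eq_bigr => jdx _ do rewrite ffunE /teval mulr_sumr.
apply: eq_big => // jdx _; apply: eq_big => // idx _.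
rewrite -mulrA; congr (_ * _); rewrite mulrC; congr (_ * _).
apply: eq_bigr => k _; by rewrite !mapply_evec mxE.
Qed.

Lemma teval_slot {R : realType} {n p : nat} (T : tensor R n p) (m : 'I_p)
  (w : 'I_p -> 'rV[R]_n) (c : R) (a b : 'rV[R]_n) :
  teval T (fun k => if k == m then c *: a + b else w k) =
  c * teval T (fun k => if k == m then a else w k) +
  teval T (fun k => if k == m then b else w k).
Proof.
rewrite /teval mulr_sumr -big_split; apply: eq_bigr => idx _.
have h (z : 'rV[R]_n) : \prod_(k | k != m) (if k == m then z else w k) 0 (idx k)
    = \prod_(k | k != m) w k 0 (idx k).
  by apply: eq_bigr => k /negbTE ->.
rewrite (bigD1 m) //= [X in _ = _ * (_ * X) + _](bigD1 m) //= [X in _ = _ + _ * X](bigD1 m) //=.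
rewrite !eqxx !h !mxE.
rewrite mulrDl mulrDr; congr (_ + _).
rewrite !mulrA. rewrite [T idx * c]mulrC. reflexivity.
Qed.

Lemma teval_vanish {R : realType} {n p : nat} (H : tensor R n p) (u : 'rV[R]_n)
  (m : 'I_p) (w : 'I_p -> 'rV[R]_n) :
  tsym H -> (forall v, tfix1 H u v = 0) ->
  teval H (fun k => if k == m then u else w k) = 0.
Proof.
move=> hs hu.
have p0 : (0 < p)%N by apply: leq_ltn_trans (ltn_ord m).
pose o0 : 'I_p := Ordinal p0.
rewrite -(teval_perm H (tperm o0 m)) //.
rewrite -(hu (fun k => if tperm o0 m k == m then u else w (tperm o0 m k))).
apply: teval_ext => k.
symmetry; case: ifP => [/eqP hk|_]; last by [].
have -> : k = o0 by apply: val_inj.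
by rewrite tpermL eqxx.
Qed.

Lemma dotvC {R : realType} {n : nat} (a b : 'rV[R]_n) : dotv a b = dotv b a.
Proof. by apply: eq_bigr => i _; rewrite mulrC. Qed.

Lemma dotvDl {R : realType} {n : nat} (c : R) (a b w : 'rV[R]_n) :
  dotv (c *: a + b) w = c * dotv a w + dotv b w.
Proof.
rewrite /dotv mulr_sumr -big_split; apply: eq_bigr => i _.
by rewrite !mxE mulrDl mulrA.
Qed.

Lemma dotvBl {R : realType} {n : nat} (a b w : 'rV[R]_n) :
  dotv (a - b) w = dotv a w - dotv b w.
Proof.
have -> : a - b = 1 *: a + (- 1) *: b by rewrite scale1r scaleN1r.
rewrite dotvDl mul1r; congr (_ + _).
rewrite /dotv -sumrN; apply: eq_bigr => i _; by rewrite !mxE mulN1r mulNr.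
Qed.

Definition Qm {R : realType} {n : nat} (u : 'rV[R]_n) : 'M[R]_n :=
  1%:M - (dotv u u)^-1 *: (u^T *m u).

Lemma Qm_sym {R : realType} {n : nat} (u : 'rV[R]_n) : (Qm u)^T = Qm u.
Proof. by rewrite /Qm linearB /= linearZ /= trmx1 trmx_mul trmxK. Qed.

Lemma mul_trmx_dotv {R : realType} {n : nat} (v u : 'rV[R]_n) :
  v *m u^T = (dotv v u)%:M.
Proof.
apply/matrixP => i j; rewrite !ord1 !mxE eqxx mulr1n.
by apply: eq_bigr => l _; rewrite mxE.
Qed.

Lemma mapply_Q {R : realType} {n : nat} (u v : 'rV[R]_n) :
  mapply (Qm u) v = v - (dotv v u / dotv u u) *: u.
Proof.
rewrite /mapply Qm_sym /Qm mulmxBr mulmx1 -scalemxAr mulmxA mul_trmx_dotv.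
by rewrite mul_scalar_mx scalerA mulrC.
Qed.

Lemma mapply_Qu {R : realType} {n : nat} (u : 'rV[R]_n) :
  dotv u u != 0 -> mapply (Qm u) u = 0.
Proof. by move=> h; rewrite mapply_Q divff // scale1r subrr. Qed.

Lemma dotv_eq0 {R : realType} {n : nat} (u : 'rV[R]_n) : dotv u u = 0 -> u = 0.
Proof.
move=> h; apply/rowP => i; rewrite mxE.
have hp : forall l : 'I_n, xpredT l -> 0 <= u 0 l * u 0 l.
  by move=> l _; rewrite -expr2 sqr_ge0.
have := @psumr_eq0P R _ xpredT (fun i => u 0 i * u 0 i) hp h i isT.
by move/eqP; rewrite mulf_eq0 orbb => /eqP.
Qed.

Lemma mapply0v {R : realType} {n : nat} (M : 'M[R]_n) : mapply M 0 = 0.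
Proof. by rewrite /mapply mul0mx. Qed.

Lemma teval_Q {R : realType} {n p : nat} (H : tensor R n p) (u : 'rV[R]_n) :
  tsym H -> (forall v, tfix1 H u v = 0) -> dotv u u != 0 ->
  forall v, teval H (fun k => mapply (Qm u) (v k)) = teval H v.
Proof.
move=> hs hu hd v.
suff hm : forall m, teval H (fun k => if (k < m)%N then mapply (Qm u) (v k) else v k)
                    = teval H v.
  by rewrite -(hm p); apply: teval_ext => k; rewrite ltn_ord.
elim => [|m IH]; first by apply: teval_ext => k.
case: (ltnP m p) => hmp; last first.
  rewrite -IH; apply: teval_ext => k.
  by rewrite ltnS (leq_trans (ltnW (ltn_ord k)) hmp) (leq_trans (ltn_ord k) hmp).
pose mo : 'I_p := Ordinal hmp.
pose w (k : 'I_p) := if (k < m)%N then mapply (Qm u) (v k) else v k.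
pose c := dotv (v mo) u / dotv u u.
transitivity (teval H (fun k => if k == mo then (- c) *: u + v mo else w k)).
  apply: teval_ext => k; rewrite /w.
  case: (eqVneq k mo) => [->|hk]; first by rewrite /= ltnSn mapply_Q scaleNr addrC.
  rewrite ltnS leq_eqVlt.
  suff -> : (val k == m) = false by [].
  by apply/negbTE; apply: contra hk => /eqP hk'; apply/eqP/val_inj.
rewrite teval_slot teval_vanish // mulr0 add0r -IH; apply: teval_ext => k.
case: (eqVneq k mo) => [->|//]; by rewrite /w /= ltnn.
Qed.

Lemma ttrans_Q {R : realType} {n p : nat} (H : tensor R n p) (u : 'rV[R]_n) :
  tsym H -> (forall v, tfix1 H u v = 0) -> dotv u u != 0 ->
  ttrans H (Qm u) = H.
Proof.
move=> hs hu hd; apply/ffunP => idx; rewrite ffunE teval_Q //.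
exact: teval_evec.
Qed.

Lemma tdotBr {R : realType} {n p : nat} (H A B : tensor R n p) :
  tdot H (tsub A B) = tdot H A - tdot H B.
Proof. by rewrite /tdot -sumrB; apply: eq_bigr => idx _; rewrite ffunE mulrBr. Qed.

Lemma step {R : realType} {n p : nat} (Ck Ck1 Cs : tensor R n p) (W : 'M[R]_n)
  (s : 'rV[R]_n) :
  (0 < p)%N -> W \in unitmx -> tsym Ck -> tsym Cs ->
  dotv (mapply (invmx W) s) (mapply (invmx W) s) != 0 ->
  is_secant_update Ck Cs W s Ck1 ->
  ttrans (tsub Ck1 Cs) W = ttrans (ttrans (tsub Ck Cs) W) (Qm (mapply (invmx W) s)).
Proof.
move=> p0 hW hsk hss hd [hsym1 hfeas hmin].
set u := mapply (invmx W) s.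
set E := tsub Ck Cs; set F := ttrans E W; set G := ttrans (tsub Ck1 Cs) W.
pose o0 : 'I_p := Ordinal p0.
have hWu : mapply W u = s by rewrite -mapply_comp mulmxV // mapply1.
have hQu : mapply (Qm u) u = 0 by exact: mapply_Qu.
pose M := W *m Qm u *m invmx W.
pose Cc := tadd Cs (ttrans E M).
have symE : tsym E by exact: tsym_tsub.
have hCc_sym : tsym Cc by apply: tsym_tadd => //; exact: tsym_ttrans.
have hCc_feas : tfix1 Cc s = tfix1 Cs s.
  apply/funext => v; rewrite /tfix1 teval_tadd teval_ttrans (@teval0v _ _ _ E _ o0) ?addr0 //=.
  by rewrite /M !mapply_comp hQu mapply0v.
have := hmin Cc hCc_sym hCc_feas.
have -> : tsub Ck1 Ck = tsub (tsub Ck1 Cs) E.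
  by apply/ffunP => idx; rewrite !ffunE; ring.
have -> : tsub Cc Ck = tsub (ttrans E M) E.
  by apply/ffunP => idx; rewrite !ffunE; ring.
have e1 : ttrans (tsub (tsub Ck1 Cs) E) W = tsub G F by rewrite ttrans_tsub.
have e2 : ttrans (tsub (ttrans E M) E) W = tsub (ttrans F (Qm u)) F.
  by rewrite ttrans_tsub ttrans_comp /M mulmxKV // -ttrans_comp.
rewrite e1 e2.
set FQ := ttrans F (Qm u).
set H := tsub G FQ; set D := tsub FQ F.
have symG : tsym G by apply: tsym_ttrans; exact: tsym_tsub.
have symFQ : tsym FQ by do 2 apply: tsym_ttrans.
have symH : tsym H by exact: tsym_tsub.
have hHu : forall v, tfix1 H u v = 0.
  move=> v; rewrite /tfix1 teval_tsub /FQ teval_ttrans (@teval0v _ _ _ F _ o0) /=; last first.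
    by [].
  rewrite subr0 /G teval_ttrans teval_tsub.
  have := congr1 (fun g => g (fun k => mapply W (v k))) hfeas; rewrite /tfix1 => e.
  rewrite (@teval_ext _ _ _ Ck1 _ (fun k => if val k == 0%N then s else mapply W (v k))).
    rewrite e; rewrite -(@teval_ext _ _ _ Cs (fun k => mapply W (if val k == 0%N then u else v k))) ?subrr //.
    by move=> k; case: ifP.
  by move=> k; case: ifP.
have cross : tdot H D = 0.
  rewrite /D tdotBr tdotC /FQ tdot_ttrans Qm_sym ttrans_Q // tdotC subrr //.
have hsplit : forall idx, tsub G F idx = H idx + D idx.
  by move=> idx; rewrite !ffunE; ring.
rewrite /frob ler_sqrt; last by apply: sumr_ge0 => idx _; exact: sqr_ge0.
under eq_bigr do rewrite hsplit.
have -> : \sum_idx (H idx + D idx) ^+ 2 =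
          \sum_idx H idx ^+ 2 + \sum_idx D idx ^+ 2 + tdot H D *+ 2.
  rewrite /tdot -sumrMnl -!big_split; apply: eq_bigr => idx _ /=; ring.
rewrite cross mul0rn addr0 gerDr => hle.
have hH0 : \sum_idx H idx ^+ 2 = 0.
  apply/eqP; rewrite eq_le hle; apply: sumr_ge0 => idx _; exact: sqr_ge0.
apply/ffunP => idx.
have := @psumr_eq0P R _ xpredT (fun idx => H idx ^+ 2) (fun i _ => sqr_ge0 (H i)) hH0 idx isT.
by rewrite /H ffunE => /eqP; rewrite sqrf_eq0 subr_eq0 => /eqP.
Qed.

Lemma dotv_suml {R : realType} {n : nat} {I : finType} (f : I -> 'rV[R]_n) w :
  dotv (\sum_i f i) w = \sum_i dotv (f i) w.
Proof.
rewrite /dotv exchange_big /=; apply: eq_bigr => l _.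
by rewrite summxE mulr_suml.
Qed.

Lemma dotvZl {R : realType} {n : nat} (c : R) (a w : 'rV[R]_n) :
  dotv (c *: a) w = c * dotv a w.
Proof. by rewrite /dotv mulr_sumr; apply: eq_bigr => i _; rewrite mxE mulrA. Qed.

Lemma span_orth {R : realType} {n : nat} (u : nat -> 'rV[R]_n) :
  (forall i, (i < n)%N -> dotv (u i) (u i) != 0) ->
  (forall i j, (i < n)%N -> (j < n)%N -> i != j -> dotv (u i) (u j) = 0) ->
  forall v, v = \sum_(i < n) (dotv v (u i) / dotv (u i) (u i)) *: u i.
Proof.
move=> hd ho v; apply/eqP; rewrite -subr_eq0; apply/eqP.
set r := v - _.
have hr : forall j : 'I_n, dotv (u j) r = 0.
  move=> j; rewrite dotvC dotvBl dotv_suml.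
  rewrite (bigD1 j) //= big1 ?addr0.
    by rewrite dotvZl mulfVK ?subrr // hd.
  move=> i hij; rewrite dotvZl (ho i j) ?mulr0 //.
pose U : 'M[R]_n := \matrix_(i < n, l < n) u i 0 l.
have hUr : U *m r^T = 0.
  apply/matrixP => i k; rewrite mxE [RHS]mxE; transitivity (dotv (u i) r); last exact: hr.
  apply: eq_bigr => l _; rewrite !mxE. by rewrite (ord1 k).
have hUU : U *m U^T = diag_mx (\row_i dotv (u i) (u i)).
  apply/matrixP => i j; rewrite !mxE.
  have -> : \sum_l U i l * U^T l j = dotv (u i) (u j).
    by apply: eq_bigr => l _; rewrite !mxE.
  case: (eqVneq i j) => [->|hij]; first by rewrite mulr1n.
  by rewrite mulr0n (ho i j) //; apply: contra hij => /eqP h; apply/eqP/val_inj.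
have hU : U \in unitmx.
  rewrite unitmxE unitfE.
  have : \det (U *m U^T) != 0.
    rewrite hUU det_diag; apply/prodf_neq0 => i _; rewrite mxE; exact: hd.
  by rewrite det_mulmx det_tr mulf_eq0 negb_or => /andP [].
have : r^T = 0 by rewrite -(mulKmx hU r^T) hUr mulmx0.
by move/(congr1 trmx); rewrite trmxK trmx0.
Qed.

Fixpoint Pm {R : realType} {n : nat} (u : nat -> 'rV[R]_n) (m : nat) : 'M[R]_n :=
  match m with
  | 0%N => 1%:M
  | m'.+1 => Pm u m' *m Qm (u m')
  end.

Theorem mainTheorem4 (R : realType) (n p : nat) (f : 'rV[R]_n -> R)
  (x : nat -> 'rV[R]_n) (W : nat -> 'M[R]_n) (C : nat -> tensor R n p)
  (Cstar : tensor R n p) (Wstar : 'M[R]_n) :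
  (2 <= p)%N ->
  Cp p f ->
  (forall k, x k.+1 - x k != 0) ->
  (forall k, W k \in unitmx) ->
  tsym (C 0%N) ->
  (forall k, is_secant_update (C k) (Ctilde p f (x k) (x k.+1 - x k)) (W k)
                (x k.+1 - x k) (C k.+1)) ->
  tsym Cstar ->
  (forall y, Dp p f y = Cstar) ->
  Wstar \in unitmx ->
  (forall k, W k = Wstar) ->
  (forall i j : 'I_n, i != j ->
     dotv (mapply (invmx Wstar) (x i.+1 - x i))
          (mapply (invmx Wstar) (x j.+1 - x j)) = 0) ->
  C n = Cstar.
Proof.
move=> hp _ hs _ hC0 hsec hCs hD hWs hW horth.
have p0 : (0 < p)%N by apply: leq_trans hp.
pose o0 : 'I_p := Ordinal p0.
pose u k := mapply (invmx Wstar) (x k.+1 - x k).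
have hsec' k : is_secant_update (C k) Cstar Wstar (x k.+1 - x k) (C k.+1).
  by move: (hsec k); rewrite (@Ctilde_cst R n p f Cstar (x k) (x k.+1 - x k) hD) (hW k).
have hsym : forall k, tsym (C k).
  by elim=> // k _; case: (hsec' k).
have hud : forall k, dotv (u k) (u k) != 0.
  move=> k; apply/negP => /eqP /dotv_eq0 h; apply: (negP (hs k)); apply/eqP.
  by rewrite -[x k.+1 - x k]mapply1 -(mulmxV hWs) mapply_comp -/(u k) h mapply0v.
have ho : forall i j, (i < n)%N -> (j < n)%N -> i != j -> dotv (u i) (u j) = 0.
  by move=> i j hi hj hij; exact: (horth (Ordinal hi) (Ordinal hj) hij).
have hF : forall k, ttrans (tsub (C k.+1) Cstar) Wstar =
                    ttrans (ttrans (tsub (C k) Cstar) Wstar) (Qm (u k)).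
  by move=> k; apply: step => //; exact: hud.
have hFP : forall m, ttrans (tsub (C m) Cstar) Wstar =
                     ttrans (ttrans (tsub (C 0%N) Cstar) Wstar) (Pm u m).
  elim => [|m IH] /=; first by rewrite ttrans1.
  by rewrite hF IH ttrans_comp.
have hPm : forall m, (m <= n)%N -> forall v, mapply (Pm u m) v =
    v - \sum_(i < m) (dotv v (u i) / dotv (u i) (u i)) *: u i.
  elim => [|m IH] hm v /=; first by rewrite big_ord0 subr0 mapply1.
  rewrite mapply_comp IH ?(ltnW hm) // mapply_Q big_ord_recr /=.
  have -> : \sum_(i < m) (dotv (v - (dotv v (u m) / dotv (u m) (u m)) *: u m) (u i)
                / dotv (u i) (u i)) *: u i =
            \sum_(i < m) (dotv v (u i) / dotv (u i) (u i)) *: u i.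
    apply: eq_bigr => i _; rewrite dotvBl dotvZl (ho m i) ?mulr0 ?subr0 //.
      exact: ltn_trans (ltn_ord i) hm.
    by rewrite neq_ltn ltn_ord orbT.
  by rewrite opprD addrA addrAC.
have hPn : forall v, mapply (Pm u n) v = 0.
  move=> v; rewrite hPm // {1}(span_orth u (fun i _ => hud i) ho v) subrr //.
apply/ffunP => idx.
have hE : tsub (C n) Cstar = ttrans (ttrans (tsub (C 0%N) Cstar) Wstar) (Pm u n *m invmx Wstar).
  by rewrite -ttrans_comp -hFP ttrans_comp mulmxV // ttrans1.
have := congr1 (fun T : tensor R n p => T idx) hE.
rewrite /= !ffunE (@teval0v _ _ _ _ _ o0) /=; last by rewrite mapply_comp hPn.
by move/eqP; rewrite subr_eq0 => /eqP.
Qed.
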